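(* Let $n_1,n_2\ge 1$ be integers, $n=n_1+n_2>3$, and consider a uniformly random arrangement of $n_1$ symbols $x$ and $n_2$ symbols $y$ (all $\binom{n}{n_1}$ arrangements equally likely). Let $R_1$ and $R_2$ be the numbers of runs of $x$'s and of $y$'s, respectively, and $R_M=\max(R_1,R_2)$. Then (i) $\mathrm{Var}(R_M\mid R_1>R_2)=\dfrac{n_2(n_2-1)(n_1-2)(n_1-1)}{(n-2)^2(n-3)}$; (ii) $\mathrm{Var}(R_M\mid R_1<R_2)=\dfrac{n_1(n_1-1)(n_2-2)(n_2-1)}{(n-2)^2(n-3)}$; (iii) $\mathrm{Var}(R_M\mid R_1=R_2)=\dfrac{(n_2-1)^2(n_1-1)^2}{(n-2)^2(n-3)}$.
   Context: A run is a maximal block of consecutive identical symbols in the arrangement. Conditional variances given an event are considered when that event has positive probability. *)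

(* Defs.v *)
From HB Require Import structures.
From mathcomp Require Import all_boot all_order all_algebra.
Set Implicit Arguments. Unset Strict Implicit. Unset Printing Implicit Defensive.
Import Order.TTheory GRing.Theory Num.Theory.
Local Open Scope ring_scope.

(* An arrangement of n symbols x (= true) and y (= false) is a bool sequence. *)
Definition runs (b : bool) (s : seq bool) : nat :=
  count (fun i => (nth false s i == b) && ((i == 0)%N || (nth false s i.-1 != b)))
        (iota 0 (size s)).

Definition arrangements (n1 n2 : nat) : {set (n1 + n2).-tuple bool} :=
  [set s : (n1 + n2).-tuple bool | count id s == n1].

(* Conditional expectation / variance of X under the uniform distribution on a
   finite set A, conditioned on the event A (assumed nonempty). *)
Definition cond_mean (T : finType) (A : {set T}) (X : T -> rat) : rat :=
  (\sum_(t in A) X t) / #|A|%:R.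

Definition cond_var (T : finType) (A : {set T}) (X : T -> rat) : rat :=
  cond_mean A (fun t => (X t - cond_mean A X) ^+ 2).

Definition R1 (n : nat) (s : n.-tuple bool) : nat := runs true s.
Definition R2 (n : nat) (s : n.-tuple bool) : nat := runs false s.
Definition RM (n : nat) (s : n.-tuple bool) : rat := (maxn (R1 s) (R2 s))%:R.

(* Main.v *)
Require Import Defs.
From HB Require Import structures.
From mathcomp Require Import all_boot all_order all_algebra.
From mathcomp Require Import ring lra zify.
Import Order.TTheory GRing.Theory Num.Theory.
Local Open Scope ring_scope.

Definition P (x y : int) : rat :=
  if (0 <= x) && (0 <= y) then ('C(absz x + absz y, absz x))%:R else 0.

Lemma P_nat (a b : nat) : P a b = ('C(a + b, a))%:R.
Proof. by []. Qed.

Lemma P_negl a y : P (Negz a) y = 0.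
Proof. by []. Qed.
Lemma P_negr x a : P x (Negz a) = 0.
Proof. by rewrite /P andbF. Qed.

Lemma m1_0 : (Posz 0 - 1 = Negz 0)%R. Proof. by []. Qed.
Lemma m1_S (a : nat) : (Posz a.+1 - 1 = Posz a)%R. Proof. by rewrite -addn1 PoszD addrK. Qed.
Lemma m1_N (a : nat) : (Negz a - 1 = Negz a.+1)%R. Proof. by rewrite !NegzE; lia. Qed.

Lemma AbX x y : x%:~R * P x y = (x + y)%:~R * P (x - 1) y.
Proof.
case: x => [[|a]|a]; last by rewrite m1_N !P_negl !mulr0.
  by rewrite m1_0 P_negl mul0r mulr0.
case: y => [b|b]; last by rewrite !P_negr !mulr0.
rewrite m1_S !P_nat -PoszD !pmulrn -!natrM; congr (_%:R).
have := mul_bin_diag (a.+1 + b) a; rewrite addSn /= => ->.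
by rewrite mulnC.
Qed.

Lemma AbY x y : y%:~R * P x y = (x + y)%:~R * P x (y - 1).
Proof.
case: y => [[|b]|b]; last by rewrite m1_N !P_negr !mulr0.
  by rewrite m1_0 P_negr mul0r mulr0.
case: x => [a|a]; last by rewrite !P_negl !mulr0.
rewrite m1_S !P_nat -PoszD !pmulrn -!natrM; congr (_%:R).
have := mul_bin_down (a + b.+1) a; rewrite addnS /= => ->.
by rewrite -addnS addKn mulnC.
Qed.

Lemma Pas x y : (x != 0) || (y != 0) -> P x y = P (x - 1) y + P x (y - 1).
Proof.
case: x => [[|a]|a]; last by rewrite m1_N !P_negl addr0.
  case: y => [[|b]|b] //.
  by rewrite m1_0 m1_S P_negl add0r !P_nat !bin0.
case: y => [[|b]|b] _; last by rewrite m1_N !P_negr addr0.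
  by rewrite m1_0 m1_S P_negr addr0 !P_nat !addn0 !binn.
rewrite !m1_S !P_nat -natrD; congr (_%:R).
by rewrite addSn binS addnS addSn addnC.
Qed.


Lemma rAbX u v u' : u' = u - 1 -> u%:~R * P u v - (u+v)%:~R * P u' v = 0 :> rat.
Proof. by move=> ->; rewrite AbX subrr. Qed.
Lemma rAbY u v v' : v' = v - 1 -> v%:~R * P u v - (u+v)%:~R * P u v' = 0 :> rat.
Proof. by move=> ->; rewrite AbY subrr. Qed.
Lemma rPas u v u' v' : u' = u - 1 -> v' = v - 1 -> (u != 0) || (v != 0) ->
  P u v - P u' v - P u v' = 0.
Proof. by move=> -> -> /Pas ->; ring. Qed.
Lemma rxPas u v u' v' : u' = u - 1 -> v' = v - 1 ->
  u%:~R * (P u v - P u' v - P u v') = 0 :> rat.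
Proof.
move=> -> ->; have [->|nz] := eqVneq u 0; first by rewrite mul0r.
by rewrite [P u v]Pas ?nz //; ring.
Qed.

Lemma lincomb (a b e : rat) : a - b = e -> e = 0 -> a = b.
Proof. by move=> H1 H2; apply/eqP; rewrite -subr_eq0 H1 H2. Qed.

Ltac lc c1 H1 c2 H2 c3 H3 c4 H4 :=
  let e1 := lazymatch type of H1 with ?e = _ => e end in
  let e2 := lazymatch type of H2 with ?e = _ => e end in
  let e3 := lazymatch type of H3 with ?e = _ => e end in
  let e4 := lazymatch type of H4 with ?e = _ => e end in
  apply: (lincomb _ _ ((c1 : rat) * e1 + (c2 : rat) * e2 + (c3 : rat) * e3 + (c4 : rat) * e4));
  [field | rewrite ?H1 ?H2 ?H3 ?H4; field].

Definition CFi (r : nat) (f l : bool) (x y : int) : rat :=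
  let X : rat := x%:~R in let Y : rat := y%:~R in
  match r with
  | 0%N => if f && l then P (x - 1) (y + 1) else if f != l then P x y
           else P (x + 1) (y - 1)
  | 1%N => if f && l then X * P (x - 1) y
           else if f != l then X * P x (y - 1) + P x y
           else Y * P x (y - 1) + P (x + 1) (y - 1)
  | _ => if f && l then X * (X - 1) / 2 * P (x - 1) (y - 1)
         else if f != l then X * (X - 1) / 2 * P x (y - 2) + X * P x (y - 1)
         else Y * (Y - 1) / 2 * P (x - 1) (y - 1) + Y * P x (y - 1)
  end.

Lemma nzS (y : int) : 0 <= y -> y + 1 != 0.
Proof. by move=> h; rewrite gt_eqF // ltr_wpDl. Qed.

Lemma Z0 : (0 : rat) = 0. Proof. by []. Qed.

Lemma idT r l (x y : int) : (0 <= x) -> (0 <= y) -> (r <= 2)%N ->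
  CFi r true l (x + 1) y = CFi r true l x y + CFi r false l x y.
Proof.
move=> hx hy; case: r => [|[|[|//]]] _; case: l; rewrite /CFi /= ?addrK.
- have H := rPas (x) (y + 1) (x - 1) (y) erefl ltac:(ring)
    ltac:(by rewrite (nzS _ hy) orbT).
  by lc (1 : rat) H (0 : rat) Z0 (0 : rat) Z0 (0 : rat) Z0.
- have H := rPas (x + 1) (y) (x) (y - 1) ltac:(ring) erefl
    ltac:(by rewrite (nzS _ hx)).
  by lc (1 : rat) H (0 : rat) Z0 (0 : rat) Z0 (0 : rat) Z0.
- have H := rxPas x y (x - 1) (y - 1) erefl erefl.
  by lc (1 : rat) H (0 : rat) Z0 (0 : rat) Z0 (0 : rat) Z0.
- have H1 := rPas (x + 1) (y) (x) (y - 1) ltac:(ring) erefl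
    ltac:(by rewrite (nzS _ hx)).
  have H2 := rAbX (x + 1) (y - 1) x ltac:(ring).
  by lc (1 : rat) H1 (1 : rat) H2 (0 : rat) Z0 (0 : rat) Z0.
- have H := rxPas x (y - 1) (x - 1) (y - 2) erefl ltac:(ring).
  by lc (((x%:~R - 1) / 2) : rat) H (0 : rat) Z0 (0 : rat) Z0 (0 : rat) Z0.
- have H1 := rAbX (x + 1) (y - 1) x ltac:(ring).
  have H2 := rAbX (x + 1) (y - 2) x ltac:(ring).
  have H3 := rAbX x (y - 2) (x - 1) erefl.
  have H4 := rAbY (x - 1) (y - 1) (y - 2) ltac:(ring).
  by lc (1 : rat) H1 ((x%:~R / 2) : rat) H2 ((y%:~R / 2) : rat) H3 ((- (y%:~R / 2)) : rat) H4.
Qed.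

Ltac lc5 c1 H1 c2 H2 c3 H3 c4 H4 c5 H5 :=
  let e1 := lazymatch type of H1 with ?e = _ => e end in
  let e2 := lazymatch type of H2 with ?e = _ => e end in
  let e3 := lazymatch type of H3 with ?e = _ => e end in
  let e4 := lazymatch type of H4 with ?e = _ => e end in
  let e5 := lazymatch type of H5 with ?e = _ => e end in
  apply: (lincomb _ _ ((c1 : rat) * e1 + (c2 : rat) * e2 + (c3 : rat) * e3
           + (c4 : rat) * e4 + (c5 : rat) * e5));
  [field | rewrite ?H1 ?H2 ?H3 ?H4 ?H5; field].

Lemma idF0 l (x y : int) : (0 <= x) -> (0 <= y) ->
  CFi 0 false l x (y + 1) = CFi 0 false l x y + CFi 0 true l x y.
Proof.
move=> hx hy; case: l; rewrite /CFi /= ?addrK.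
- have H := rPas x (y + 1) (x - 1) y erefl ltac:(ring) ltac:(by rewrite (nzS _ hy) orbT).
  by lc (1 : rat) H (0 : rat) Z0 (0 : rat) Z0 (0 : rat) Z0.
- have H := rPas (x + 1) y x (y - 1) ltac:(ring) erefl ltac:(by rewrite (nzS _ hx)).
  by lc (1 : rat) H (0 : rat) Z0 (0 : rat) Z0 (0 : rat) Z0.
Qed.

Lemma idF r l (x y : int) : (0 <= x) -> (0 <= y) -> (r <= 1)%N ->
  CFi r.+1 false l x (y + 1) =
  CFi r.+1 false l x y + CFi r.+1 true l x y + CFi r true l x y.
Proof.
move=> hx hy; have e2 : y + 1 - 2 = y - 1 by ring.
case: r => [|[|//]] _; case: l; rewrite /CFi /= ?addrK ?e2.
- have H1 := rPas x (y + 1) (x - 1) y erefl ltac:(ring) ltac:(by rewrite (nzS _ hy) orbT).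
  have H2 := rxPas x y (x - 1) (y - 1) erefl erefl.
  by lc (1 : rat) H1 (1 : rat) H2 (0 : rat) Z0 (0 : rat) Z0.
- have H1 := rPas (x + 1) y x (y - 1) ltac:(ring) erefl ltac:(by rewrite (nzS _ hx)).
  have H2 := rAbY x y (y - 1) erefl.
  by lc (1 : rat) H1 (1 : rat) H2 (0 : rat) Z0 (0 : rat) Z0.
- have H1 := rxPas x (y - 1) (x - 1) (y - 2) erefl ltac:(ring).
  have H2 := rxPas x y (x - 1) (y - 1) erefl erefl.
  by lc ((x%:~R - 1) / 2 : rat) H1 (1 : rat) H2 (0 : rat) Z0 (0 : rat) Z0.
- have H1 := rAbY x y (y - 1) erefl.
  have H2 := rAbY (x - 1) y (y - 1) erefl.
  have H3 := rxPas x (y - 1) (x - 1) (y - 2) erefl ltac:(ring).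
  have H4 := rAbY (x - 1) (y - 1) (y - 2) ltac:(ring).
  have H5 := rAbX x (y - 2) (x - 1) erefl.
  by lc5 (1 : rat) H1 ((y%:~R + 1) / 2 : rat) H2 (-1 : rat) H3
     ((x%:~R + 1) / 2 : rat) H4 (- ((x%:~R + 1) / 2) : rat) H5.
Qed.

Set Implicit Arguments. Unset Strict Implicit. Unset Printing Implicit Defensive.
Fixpoint arrn (n a : nat) : seq (seq bool) :=
  match n with
  | 0 => if a == 0 then [:: [::]] else [::]
  | n'.+1 => (if a is a'.+1 then map (cons true) (arrn n' a') else [::])
             ++ map (cons false) (arrn n' a)
  end.

Lemma mem_arrn n a s : (s \in arrn n a) = (size s == n) && (count id s == a).
Proof.
elim: n a s => [|n IH] a s /=.
  case: a => [|a] /=; last by rewrite in_nil; case: s => [|c s] //=; rewrite andbF.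
  by rewrite inE; case: s.
rewrite mem_cat; case: s => [|c s] /=.
  apply/negbTE; rewrite negb_or; apply/andP; split.
    by case: a => [|a] //=; apply/mapP => -[? _].
  by apply/mapP => -[? _].
have Hm (b : bool) L : (c :: s \in map (cons b) L) = (c == b) && (s \in L).
  apply/mapP/andP => [[t Ht [-> ->]]|[/eqP -> Hs]]; first by [].
  by exists s.
case: a => [|a] /=; rewrite ?Hm IH eqSS; case: c {Hm} => //=.
all: by rewrite ?orbF ?add1n ?eqSS ?andbF.
Qed.

Lemma uniq_arrn n a : uniq (arrn n a).
Proof.
elim: n a => [|n IH] a /=; first by case: (a == 0).
have Hi (b : bool) : injective (cons b) by move=> x y [].
rewrite cat_uniq (map_inj_uniq (Hi false)) IH andbT.
case: a => [|a] /=; first by apply/hasPn => x _; rewrite in_nil.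
rewrite map_inj_uniq // IH /=.
apply/hasPn => s /mapP [t _ ->]; by apply/mapP => -[u _ [] ].

Qed.

Lemma arrn0 n : arrn n 0 = [:: nseq n false].
Proof. by elim: n => [|n IH] //=; rewrite IH. Qed.

Lemma arrn_big n m : (n < m)%N -> arrn n m = [::].
Proof.
move=> H; apply/eqP; rewrite -size_eq0; apply/eqP.
case E: (arrn n m) => [|s l] //; have : s \in arrn n m by rewrite E inE eqxx.
rewrite mem_arrn => /andP [/eqP Hs /eqP Hc].
have := count_size id s; rewrite Hs Hc => Hle.
have := leq_ltn_trans Hle H; by rewrite ltnn.
Qed.

Lemma arrnn n : arrn n n = [:: nseq n true].
Proof. by elim: n => [|n IH] //=; rewrite IH arrn_big. Qed.

Lemma runs_nil b : runs b [::] = 0%N.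
Proof. by []. Qed.

Lemma runs_cons b c s :
  runs b (c :: s) = ((if (c == b) && (head (~~ b) s == b) then 0 else (c == b : nat))
                     + runs b s)%N.
Proof.
rewrite /runs /=.
case: s => [|d s] /=; first by case: c; case: b.
rewrite -(add1n 1) iotaDl count_map.
have -> : count (preim (addn 1)
   (fun i => (nth false [:: c, d & s] i == b) &&
             ((i == 0)%N || (nth false [:: c, d & s] i.-1 != b)))) (iota 1 (size s))
  = count (fun i => (nth false (d :: s) i == b) &&
             ((i == 0)%N || (nth false (d :: s) i.-1 != b))) (iota 1 (size s)).
  apply: eq_in_count => i; rewrite mem_iota => /andP [Hi _].
  by case: i Hi.
by case: c; case: d; case: b.
Qed.

Lemma runs_nseq b c n : runs b (nseq n.+1 c) = (c == b : nat).
Proof.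
elim: n => [|n IH]; first by rewrite /= runs_cons /=; case: c; case: b.
by rewrite [nseq _ _]/= runs_cons IH /=; move: IH; case: c; case: b.
Qed.

Lemma runs_rel c s :
  (runs true (c :: s) + 1 = runs false (c :: s) + head false (c :: s)
                             + last false (c :: s))%N.
Proof.
elim: s c => [c|d s IH c]; first by case: c.
rewrite runs_cons [runs false _]runs_cons /=.
have := IH d; rewrite /= => H.
by move: H; case: c; case: d => /=; lia.
Qed.

Open Scope ring_scope.

Lemma sum_tuple_arrn n a (G : seq bool -> rat) :
  \sum_(t : n.-tuple bool | count id t == a) G t = \sum_(s <- arrn n a) G s.
Proof.
have P : perm_eq (arrn n a)
          (map val (enum [pred t : n.-tuple bool | count id t == a])).
  apply: uniq_perm; first exact: uniq_arrn.
    by rewrite map_inj_uniq ?enum_uniq //; apply: val_inj.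
  move=> s; rewrite mem_arrn; apply/idP/idP.
    move=> /andP [/eqP Hs Ha]; apply/mapP; exists (Tuple (introT eqP Hs)) => //.
    by rewrite mem_enum.
  by move=> /mapP [t]; rewrite mem_enum => Ht ->; rewrite size_tuple eqxx.
by rewrite (perm_big _ P) big_map big_enum; apply: eq_bigl => t; rewrite inE.
Qed.

Definition cnd (f l : bool) (s : seq bool) : bool :=
  [&& (0 < size s)%N, head false s == f & last false s == l].

Definition W (r : nat) (f l : bool) (n a : nat) : rat :=
  \sum_(s <- arrn n a) (if cnd f l s then ('C(runs false s, r))%:R else 0).

Lemma arrnSS n a :
  arrn n.+1 a.+1 = map (cons true) (arrn n a) ++ map (cons false) (arrn n a.+1).
Proof. by []. Qed.
Lemma arrnS0 n : arrn n.+1 0 = map (cons false) (arrn n 0).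
Proof. by []. Qed.

Lemma W_recT r l n a :
  W r true l n.+2 a.+1 = W r true l n.+1 a + W r false l n.+1 a.
Proof.
have E : W r true l n.+2 a.+1 = \sum_(s <- arrn n.+1 a)
     (if cnd true l (true :: s) then ('C(runs false (true :: s), r))%:R else 0).
  rewrite /W arrnSS big_cat !big_map (big1 (arrn n.+1 a.+1)); first exact: addr0.
  by move=> s _; rewrite /cnd.
rewrite E -big_split; apply: eq_big_seq => s; rewrite mem_arrn => /andP[/eqP Hs _].
case: s Hs => [|d s] // _.
rewrite /cnd /= runs_cons /= add0n.
by case: d; case: (last _ s == l); rewrite /= ?addr0 ?add0r.
Qed.

Lemma W_recF r l n a :
  W r.+1 false l n.+2 a = W r.+1 false l n.+1 a + W r.+1 true l n.+1 a
                          + W r true l n.+1 a.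
Proof.
have E : W r.+1 false l n.+2 a = \sum_(s <- arrn n.+1 a)
     (if cnd false l (false :: s) then ('C(runs false (false :: s), r.+1))%:R else 0).
  case: a => [|a]; first by rewrite /W [arrn n.+2 _]arrnS0 big_map.
  rewrite /W [arrn n.+2 _]arrnSS big_cat !big_map (big1 (arrn n.+1 a)).
    exact: add0r.
  by move=> s _; rewrite /cnd.
rewrite E -!big_split; apply: eq_big_seq => s; rewrite mem_arrn => /andP[/eqP Hs _].
case: s Hs => [|d s] // _.
rewrite /cnd /= runs_cons /=.
case: d; case: (last _ s == l); rewrite /= ?addr0 ?add0r ?add1n ?binS ?natrD //.
Qed.

Lemma W_recF0 l n a :
  W 0 false l n.+2 a = W 0 false l n.+1 a + W 0 true l n.+1 a.
Proof.
have E : W 0 false l n.+2 a = \sum_(s <- arrn n.+1 a)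
     (if cnd false l (false :: s) then ('C(runs false (false :: s), 0))%:R else 0).
  case: a => [|a]; first by rewrite /W [arrn n.+2 _]arrnS0 big_map.
  rewrite /W [arrn n.+2 _]arrnSS big_cat !big_map (big1 (arrn n.+1 a)).
    exact: add0r.
  by move=> s _; rewrite /cnd.
rewrite E -!big_split; apply: eq_big_seq => s; rewrite mem_arrn => /andP[/eqP Hs _].
case: s Hs => [|d s] // _.
rewrite /cnd /= !bin0.
by case: d; case: (last _ s == l); rewrite /= ?addr0 ?add0r.
Qed.

Lemma last_nseq (x c : bool) n : last x (nseq n.+1 c) = c.
Proof. by elim: n x => [|n IH] x //; exact: IH. Qed.

Lemma W_n0 r f l n :
  W r f l n.+1 0 = (if (f == false) && (l == false) then ('C(1, r))%:R else 0).
Proof.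
rewrite /W arrn0 big_cons big_nil addr0 /cnd last_nseq runs_nseq /=.
by case: f; case: l.
Qed.

Lemma W_nn r f l n :
  W r f l n.+1 n.+1 = (if f && l then ('C(0, r))%:R else 0).
Proof.
rewrite /W arrnn big_cons big_nil addr0 /cnd last_nseq runs_nseq /=.
by case: f; case: l.
Qed.

Lemma W_edgeT r l B : W r true l B.+2 1 = (if l then 0 else ('C(1, r))%:R).
Proof. by rewrite W_recT !W_n0 /= add0r; case: l. Qed.

Lemma W_edgeF r l A : W r false l A.+2 A.+1 = (if l then ('C(1, r))%:R else 0).
Proof.
case: r => [|r].
  by rewrite W_recF0 !W_nn /= add0r; case: l.
rewrite W_recF !W_nn /= add0r; case: l => //=.
by case: r => [|r]; rewrite ?bin0 //= addr0.
Qed.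

Lemma PosS (a : nat) : Posz a.+1 = Posz a + 1.
Proof. by rewrite -addn1 PoszD. Qed.

Lemma closed n : forall A B : nat, (A + B < n)%N -> forall r f l, (r <= 2)%N ->
  W r f l (A + B).+2 A.+1 = CFi r f l A B.
Proof.
elim: n => [//|n IH] A B hn r f l hr.
case: f.
- case: A hn => [|A] hn.
    rewrite add0n W_edgeT.
    case: r hr => [|[|[|//]]] _; case: l; rewrite /CFi /= ?m1_0 ?P_negl ?mul0r ?add0r ?P_nat ?bin0 //.
  have hn' : (A + B < n)%N by rewrite -ltnS -addSn.
  by rewrite addSn W_recT !IH // PosS idT.
case: B hn => [|B] hn.
  rewrite addn0 W_edgeF.
  case: r hr => [|[|[|//]]] _; case: l; rewrite /CFi /= ?m1_0 ?P_negr ?mul0r ?mulr0 ?add0r ?addr0 ?P_nat ?bin0 ?addn0 ?binn //.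
have hn' : (A + B < n)%N by rewrite -ltnS -addnS.
rewrite addnS PosS.
case: r hr => [|r] hr.
  by rewrite W_recF0 !IH // idF0.
by rewrite W_recF !IH // ?idF // ltnW.
Qed.

Lemma cond_var_alt (T : finType) (A : {set T}) (X : T -> rat) : (0 < #|A|)%N ->
  cond_var A X = (\sum_(t in A) X t ^+ 2) / #|A|%:R
                 - ((\sum_(t in A) X t) / #|A|%:R) ^+ 2.
Proof.
move=> hA; rewrite /cond_var /cond_mean.
set N := #|A|%:R; set S := \sum_(t in A) X t.
have hN : N != 0 by rewrite pnatr_eq0 -lt0n.
have -> : \sum_(t in A) (X t - S / N) ^+ 2
   = \sum_(t in A) X t ^+ 2 - 2 * (S / N) * S + (S / N) ^+ 2 * N.
  rewrite (eq_bigr (fun t => X t ^+ 2 - 2 * (S / N) * X t + (S / N) ^+ 2));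
    last by move=> t _; ring.
  rewrite big_split sumrB /= -mulr_sumr sumr_const /N /S; ring.
move: hN; rewrite /N /S => hN; by field.
Qed.

Lemma bin2r (Y : nat) : ('C(Y, 2))%:R = (Y%:R * (Y%:R - 1)) / 2 :> rat.
Proof.
elim: Y => [|Y IH]; first by rewrite bin0n !mul0r.
by rewrite binS bin1 natrD IH -addn1 natrD; field.
Qed.

Lemma sum_ev n a (Pb : nat -> nat -> bool) (F : nat -> nat -> rat) :
  \sum_(t in [set s : n.-tuple bool | count id s == a] :&:
          [set s : n.-tuple bool | Pb (runs true s) (runs false s)])
      F (runs true t) (runs false t)
  = \sum_(s <- arrn n a)
      (if Pb (runs true s) (runs false s) then F (runs true s) (runs false s) else 0).
Proof.
rewrite -(sum_tuple_arrn n a (fun s =>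
   if Pb (runs true s) (runs false s) then F (runs true s) (runs false s) else 0)).
rewrite big_mkcond [RHS]big_mkcond /=; apply: eq_bigr => t _.
by rewrite !inE; case: (count id t == a); case: (Pb _ _).
Qed.

Lemma gt_sum n a (G : nat -> rat) :
  \sum_(s <- arrn n.+1 a) (if (runs false s < runs true s)%N
      then G (maxn (runs true s) (runs false s)) else 0)
  = \sum_(s <- arrn n.+1 a) (if cnd true true s then G (runs false s).+1 else 0).
Proof.
apply: eq_big_seq => s; rewrite mem_arrn => /andP[/eqP Hs _].
case: s Hs => [|c s] // _; have h := runs_rel c s.
move: h; rewrite /cnd /=.
move: (runs true _) (runs false _) => r1 r2.
case: c; case: (last _ s) => /= h.
- have -> : r1 = r2.+1 by lia.
  by rewrite ltnSn (maxn_idPl (leqnSn _)).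
- by have -> : (r2 < r1)%N = false by lia.
- by have -> : (r2 < r1)%N = false by lia.
- by have -> : (r2 < r1)%N = false by lia.
Qed.

Lemma lt_sum n a (G : nat -> rat) :
  \sum_(s <- arrn n.+1 a) (if (runs true s < runs false s)%N
      then G (maxn (runs true s) (runs false s)) else 0)
  = \sum_(s <- arrn n.+1 a) (if cnd false false s then G (runs false s) else 0).
Proof.
apply: eq_big_seq => s; rewrite mem_arrn => /andP[/eqP Hs _].
case: s Hs => [|c s] // _; have h := runs_rel c s.
move: h; rewrite /cnd /=.
move: (runs true _) (runs false _) => r1 r2.
case: c; case: (last _ s) => /= h.
- by have -> : (r1 < r2)%N = false by lia.
- by have -> : (r1 < r2)%N = false by lia.
- by have -> : (r1 < r2)%N = false by lia.
- have E : r2 = r1.+1 by lia.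
  by rewrite E ltnSn (maxn_idPr (leqnSn _)).
Qed.

Lemma eq_sum n a (G : nat -> rat) :
  \sum_(s <- arrn n.+1 a) (if (runs true s == runs false s)
      then G (maxn (runs true s) (runs false s)) else 0)
  = \sum_(s <- arrn n.+1 a) (if cnd true false s then G (runs false s) else 0)
    + \sum_(s <- arrn n.+1 a) (if cnd false true s then G (runs false s) else 0).
Proof.
rewrite -big_split; apply: eq_big_seq => s; rewrite mem_arrn => /andP[/eqP Hs _].
case: s Hs => [|c s] // _; have h := runs_rel c s.
move: h; rewrite /cnd /=.
move: (runs true _) (runs false _) => r1 r2.
case: c; case: (last _ s) => /= h.
- by have -> : (r1 == r2) = false by apply/eqP; lia.
- have E : r1 = r2 by lia.
  by rewrite E eqxx maxnn addr0.
- have E : r1 = r2 by lia.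
  by rewrite E eqxx maxnn add0r.
- by have -> : (r1 == r2) = false by apply/eqP; lia.
Qed.

Lemma auxS (Y : rat) : (Y + 1) ^+ 2 = 2 * (Y * (Y - 1) / 2) + 3 * Y + 1.
Proof. by field. Qed.
Lemma aux2 (Y : rat) : Y ^+ 2 = 2 * (Y * (Y - 1) / 2) + Y.
Proof. by field. Qed.

Lemma momS f l n a :
  [/\ \sum_(s <- arrn n a) (if cnd f l s then ((runs false s).+1)%:R ^+ 0 else 0)
        = W 0 f l n a,
      \sum_(s <- arrn n a) (if cnd f l s then ((runs false s).+1)%:R ^+ 1 else 0)
        = W 1 f l n a + W 0 f l n a &
      \sum_(s <- arrn n a) (if cnd f l s then ((runs false s).+1)%:R ^+ 2 else 0)
        = 2 * W 2 f l n a + 3 * W 1 f l n a + W 0 f l n a].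
Proof.
rewrite /W; split.
- by apply: eq_bigr => s _; rewrite bin0.
- rewrite -big_split; apply: eq_bigr => s _; case: (cnd _ _ _); rewrite ?addr0 //.
  by rewrite bin0 bin1 -addn1 natrD.
- rewrite !mulr_sumr -!big_split; apply: eq_bigr => s _; case: (cnd _ _ _);
    last by rewrite /=; ring.
  by rewrite bin0 bin1 bin2r -addn1 natrD; apply: auxS.
Qed.

Lemma mom f l n a :
  [/\ \sum_(s <- arrn n a) (if cnd f l s then (runs false s)%:R ^+ 0 else 0)
        = W 0 f l n a,
      \sum_(s <- arrn n a) (if cnd f l s then (runs false s)%:R ^+ 1 else 0)
        = W 1 f l n a &
      \sum_(s <- arrn n a) (if cnd f l s then (runs false s)%:R ^+ 2 else 0)
        = 2 * W 2 f l n a + W 1 f l n a].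
Proof.
rewrite /W; split.
- by apply: eq_bigr => s _; rewrite bin0.
- by apply: eq_bigr => s _; rewrite bin1.
- rewrite !mulr_sumr -!big_split; apply: eq_bigr => s _; case: (cnd _ _ _);
    last by rewrite /=; ring.
  by rewrite bin1 bin2r; apply: aux2.
Qed.

Lemma Egt_sum A B k :
  \sum_(t in arrangements A.+1 B.+1 :&: [set s | (R2 s < R1 s)%N]) (RM t) ^+ k
  = \sum_(s <- arrn (A + B).+2 A.+1)
      (if cnd true true s then ((runs false s).+1)%:R ^+ k else 0).
Proof.
rewrite /arrangements /RM /R1 /R2.
rewrite (sum_ev _ _ (fun r1 r2 => (r2 < r1)%N) (fun r1 r2 => (maxn r1 r2)%:R ^+ k)).
rewrite (gt_sum _ _ (fun m => m%:R ^+ k)).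
by rewrite -addnS.
Qed.

Lemma Elt_sum A B k :
  \sum_(t in arrangements A.+1 B.+1 :&: [set s | (R1 s < R2 s)%N]) (RM t) ^+ k
  = \sum_(s <- arrn (A + B).+2 A.+1)
      (if cnd false false s then (runs false s)%:R ^+ k else 0).
Proof.
rewrite /arrangements /RM /R1 /R2.
rewrite (sum_ev _ _ (fun r1 r2 => (r1 < r2)%N) (fun r1 r2 => (maxn r1 r2)%:R ^+ k)).
rewrite (lt_sum _ _ (fun m => m%:R ^+ k)).
by rewrite -addnS.
Qed.

Lemma Eeq_sum A B k :
  \sum_(t in arrangements A.+1 B.+1 :&: [set s | R1 s == R2 s]) (RM t) ^+ k
  = \sum_(s <- arrn (A + B).+2 A.+1)
      (if cnd true false s then (runs false s)%:R ^+ k else 0)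
  + \sum_(s <- arrn (A + B).+2 A.+1)
      (if cnd false true s then (runs false s)%:R ^+ k else 0).
Proof.
rewrite /arrangements /RM /R1 /R2.
rewrite (sum_ev _ _ (fun r1 r2 => r1 == r2) (fun r1 r2 => (maxn r1 r2)%:R ^+ k)).
rewrite (eq_sum _ _ (fun m => m%:R ^+ k)).
by rewrite -addnS.
Qed.

Lemma card_sum (T : finType) (E : {set T}) (X : T -> rat) :
  #|E|%:R = \sum_(t in E) X t ^+ 0.
Proof. by rewrite (eq_bigr (fun _ => 1)) // sumr_const. Qed.

Lemma Wc r f l A B : (r <= 2)%N -> W r f l (A + B).+2 A.+1 = CFi r f l A B.
Proof. by move=> hr; apply: (closed (n := (A + B).+1)). Qed.

Lemma PzR (A : nat) : ((Posz A)%:~R : rat) = A%:R.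
Proof. by []. Qed.

Lemma solve (a b u v : rat) : a != 0 -> a * u = b * v -> u = b / a * v.
Proof. by move=> ha h; rewrite mulrAC -h; field. Qed.

Lemma alg_gt (A B : nat) : (2 <= A + B)%N -> CFi 0 true true A B != 0 ->
  (2 * CFi 2 true true A B + 3 * CFi 1 true true A B + CFi 0 true true A B) /
  CFi 0 true true A B -
  ((CFi 1 true true A B + CFi 0 true true A B) / CFi 0 true true A B) ^+ 2 =
  (B%:R + 1) * (B%:R + 1 - 1) * (A%:R + 1 - 2) * (A%:R + 1 - 1) /
  ((A%:R + B%:R + 2 - 2) ^+ 2 * (A%:R + B%:R + 2 - 3)).
Proof.
move=> hAB; rewrite /CFi /= !PzR.
have hXY : (2 : rat) <= A%:R + B%:R by rewrite -natrD ler_nat.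
have hX : (0 : rat) <= A%:R by rewrite ler0n.
have hY : (0 : rat) <= B%:R by rewrite ler0n.
set X : rat := A%:R; set Y : rat := B%:R.
have hY1 : Y + 1 != 0 by apply/eqP => h; lra.
have hXY1 : X + Y - 1 != 0 by apply/eqP => h; lra.
have hXY0 : X + Y != 0 by apply/eqP => h; lra.
have H1 := rAbY (A%:Z - 1) (B%:Z + 1) B ltac:(ring).
have H2 := rAbY (A%:Z - 1) B (B%:Z - 1) erefl.
set Q := P (A%:Z - 1) B in H1 H2 *.
have E1 : P (A%:Z - 1) (B%:Z + 1) = (X + Y) / (Y + 1) * Q.
  move/eqP: H1; rewrite subr_eq0 => /eqP H1.
  apply: (solve hY1); rewrite /X /Y.
  transitivity ((B%:Z + 1)%:~R * P (A%:Z - 1) (B%:Z + 1) : rat); first ring.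
  by rewrite H1; ring.
have E2 : P (A%:Z - 1) (B%:Z - 1) = Y / (X + Y - 1) * Q.
  move/eqP: H2; rewrite subr_eq0 => /eqP H2.
  apply: (solve hXY1); rewrite /X /Y.
  transitivity ((A%:Z - 1 + B%:Z)%:~R * P (A%:Z - 1) (B%:Z - 1) : rat); first ring.
  by rewrite -H2; ring.
rewrite E1 E2 => hN.
have hQ : Q != 0 by apply: contraNneq hN => ->; rewrite mulr0.
field.
by rewrite hQ andbT; apply/and3P; split; apply/eqP => h; lra.
Qed.

Lemma alg_lt (A B : nat) : (2 <= A + B)%N -> CFi 0 false false A B != 0 ->
  (2 * CFi 2 false false A B + CFi 1 false false A B) / CFi 0 false false A B -
  (CFi 1 false false A B / CFi 0 false false A B) ^+ 2 =
  (A%:R + 1) * (A%:R + 1 - 1) * (B%:R + 1 - 2) * (B%:R + 1 - 1) /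
  ((A%:R + B%:R + 2 - 2) ^+ 2 * (A%:R + B%:R + 2 - 3)).
Proof.
move=> hAB; rewrite /CFi /= !PzR.
have hXY : (2 : rat) <= A%:R + B%:R by rewrite -natrD ler_nat.
have hX : (0 : rat) <= A%:R by rewrite ler0n.
have hY : (0 : rat) <= B%:R by rewrite ler0n.
set X : rat := A%:R; set Y : rat := B%:R.
have hX1 : X + 1 != 0 by apply/eqP => h; lra.
have hXY1 : X + Y - 1 != 0 by apply/eqP => h; lra.
have hXY0 : X + Y != 0 by apply/eqP => h; lra.
have H1 := rAbX (A%:Z + 1) (B%:Z - 1) A ltac:(ring).
have H2 := rAbX A (B%:Z - 1) (A%:Z - 1) erefl.
set Q := P A (B%:Z - 1) in H1 H2 *.
have E1 : P (A%:Z + 1) (B%:Z - 1) = (X + Y) / (X + 1) * Q.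
  move/eqP: H1; rewrite subr_eq0 => /eqP H1.
  apply: (solve hX1); rewrite /X /Y.
  transitivity ((A%:Z + 1)%:~R * P (A%:Z + 1) (B%:Z - 1) : rat); first ring.
  by rewrite H1; ring.
have E2 : P (A%:Z - 1) (B%:Z - 1) = X / (X + Y - 1) * Q.
  move/eqP: H2; rewrite subr_eq0 => /eqP H2.
  apply: (solve hXY1); rewrite /X /Y.
  transitivity ((A%:Z + (B%:Z - 1))%:~R * P (A%:Z - 1) (B%:Z - 1) : rat); first ring.
  by rewrite -H2; ring.
rewrite E1 E2 => hN.
have hQ : Q != 0 by apply: contraNneq hN => ->; rewrite mulr0.
field.
by rewrite hQ andbT; apply/and3P; split; apply/eqP => h; lra.
Qed.

Lemma alg_eq (A B : nat) : (2 <= A + B)%N -> CFi 0 true false A B != 0 ->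
  (2 * CFi 2 true false A B + CFi 1 true false A B
   + (2 * CFi 2 false true A B + CFi 1 false true A B))
  / (CFi 0 true false A B + CFi 0 false true A B) -
  ((CFi 1 true false A B + CFi 1 false true A B)
   / (CFi 0 true false A B + CFi 0 false true A B)) ^+ 2 =
  (B%:R + 1 - 1) ^+ 2 * (A%:R + 1 - 1) ^+ 2 /
  ((A%:R + B%:R + 2 - 2) ^+ 2 * (A%:R + B%:R + 2 - 3)).
Proof.
move=> hAB; rewrite /CFi /= !PzR.
have hXY : (2 : rat) <= A%:R + B%:R by rewrite -natrD ler_nat.
have hX : (0 : rat) <= A%:R by rewrite ler0n.
have hY : (0 : rat) <= B%:R by rewrite ler0n.
set X : rat := A%:R; set Y : rat := B%:R.
have hXY1 : X + Y - 1 != 0 by apply/eqP => h; lra.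
have hXY0 : X + Y != 0 by apply/eqP => h; lra.
have H1 := rAbY A B (B%:Z - 1) erefl.
have H2 := rAbY A (B%:Z - 1) (B%:Z - 2) ltac:(ring).
set Q := P A B in H1 H2 *.
have E1 : P A (B%:Z - 1) = Y / (X + Y) * Q.
  move/eqP: H1; rewrite subr_eq0 => /eqP H1.
  apply: (solve hXY0); rewrite /X /Y.
  transitivity ((A%:Z + B%:Z)%:~R * P A (B%:Z - 1) : rat); first ring.
  by rewrite -H1; ring.
have E2 : P A (B%:Z - 2) = (Y - 1) / (X + Y - 1) * P A (B%:Z - 1).
  move/eqP: H2; rewrite subr_eq0 => /eqP H2.
  apply: (solve hXY1); rewrite /X /Y.
  transitivity ((A%:Z + (B%:Z - 1))%:~R * P A (B%:Z - 2) : rat); first ring.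
  by rewrite -H2; ring.
rewrite E2 E1 => hQ; clearbody Q.
field.
have h2Q : Q + Q != 0 by rewrite -mulr2n mulrn_eq0 negb_or hQ.
by rewrite h2Q andbT; apply/andP; split; apply/eqP => h; lra.
Qed.

Unset Implicit Arguments.

Theorem lemma3 (n1 n2 : nat) :
  (1 <= n1)%N -> (1 <= n2)%N -> (3 < n1 + n2)%N ->
  let n : rat := (n1 + n2)%:R in
  let m1 : rat := n1%:R in
  let m2 : rat := n2%:R in
  let Egt := arrangements n1 n2 :&: [set s | (R2 s < R1 s)%N] in
  let Elt := arrangements n1 n2 :&: [set s | (R1 s < R2 s)%N] in
  let Eeq := arrangements n1 n2 :&: [set s | R1 s == R2 s] in
  [/\ (0 < #|Egt|)%N ->
        cond_var Egt (@RM _) =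
        m2 * (m2 - 1) * (m1 - 2) * (m1 - 1) / ((n - 2) ^+ 2 * (n - 3)),
      (0 < #|Elt|)%N ->
        cond_var Elt (@RM _) =
        m1 * (m1 - 1) * (m2 - 2) * (m2 - 1) / ((n - 2) ^+ 2 * (n - 3)) &
      (0 < #|Eeq|)%N ->
        cond_var Eeq (@RM _) =
        (m2 - 1) ^+ 2 * (m1 - 1) ^+ 2 / ((n - 2) ^+ 2 * (n - 3))].
Proof.
case: n1 => [//|A] _; case: n2 => [//|B] _ h3.
move=> n m1 m2 Egt Elt Eeq; rewrite {}/n {}/m1 {}/m2.
have hAB : (2 <= A + B)%N by move: h3; rewrite addSn addnS; lia.
have eN : (A.+1 + B.+1)%:R = A%:R + B%:R + 2 :> rat.
  by rewrite addSn addnS -addn2 !natrD.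
have eA : (A.+1)%:R = A%:R + 1 :> rat by rewrite -addn1 natrD.
have eB : (B.+1)%:R = B%:R + 1 :> rat by rewrite -addn1 natrD.
have hXY : (2 : rat) <= A%:R + B%:R by rewrite -natrD ler_nat.
have hX : (0 : rat) <= A%:R by rewrite ler0n.
have hY : (0 : rat) <= B%:R by rewrite ler0n.
rewrite eN eA eB; split.
- move=> hE; rewrite cond_var_alt //.
  have S1 : \sum_(t in Egt) RM t = \sum_(t in Egt) RM t ^+ 1.
    by apply: eq_bigr => t _; rewrite expr1.
  have [M0 M1 M2] := momS true true (A + B).+2 A.+1.
  have hN : CFi 0 true true A B != 0.
    by rewrite -Wc // -M0 -Egt_sum -card_sum pnatr_eq0 -lt0n.
  rewrite S1 (card_sum _ (@RM _)) /Egt !Egt_sum.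
  rewrite M0 M1 M2 !Wc //.
  exact: alg_gt.
- move=> hE; rewrite cond_var_alt //.
  have S1 : \sum_(t in Elt) RM t = \sum_(t in Elt) RM t ^+ 1.
    by apply: eq_bigr => t _; rewrite expr1.
  have [M0 M1 M2] := mom false false (A + B).+2 A.+1.
  have hN : CFi 0 false false A B != 0.
    by rewrite -Wc // -M0 -Elt_sum -card_sum pnatr_eq0 -lt0n.
  rewrite S1 (card_sum _ (@RM _)) /Elt !Elt_sum.
  rewrite M0 M1 M2 !Wc //.
  exact: alg_lt.
- move=> hE; rewrite cond_var_alt //.
  have S1 : \sum_(t in Eeq) RM t = \sum_(t in Eeq) RM t ^+ 1.
    by apply: eq_bigr => t _; rewrite expr1.
  have [M0 M1 M2] := mom true false (A + B).+2 A.+1.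
  have [N0 N1 N2] := mom false true (A + B).+2 A.+1.
  have hN : CFi 0 true false A B != 0.
    have : CFi 0 true false A B + CFi 0 false true A B != 0.
      by rewrite -!Wc // -M0 -N0 -Eeq_sum -card_sum pnatr_eq0 -lt0n.
    by rewrite /CFi /=; apply: contraNneq => ->; rewrite addr0.
  rewrite S1 (card_sum _ (@RM _)) /Eeq !Eeq_sum.
  rewrite M0 M1 M2 N0 N1 N2 !Wc //.
  exact: alg_eq.
Qed.
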